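(* Let $\delta:\,]0,+\infty[\to\mathbb R$ be nonnegative, bounded and continuously differentiable with $\lim_{r\downarrow0}\sqrt r\,\delta'(r)=0$ (so that $u\mapsto\delta(u^2)$ extends to a continuously differentiable function on $\mathbb R$). Consider the system $$u''+\delta(u^2)u^2u'=\frac{Eu}{2},\qquad E'=-4\delta(u^2)(u')^2,$$ and the invariant manifold $\mathcal M=\{(u,u',E)\in\mathbb R\times\mathbb R\times\mathbb R:\ 2(u')^2-Eu^2=1\}$. Let $(u,E):\,]A,0]\to\mathbb R^2$ be a solution of this system lying on $\mathcal M$ and maximal to the left. If $A>-\infty$, then there exists $s_1\in\,]A,0]$ such that $u'(s)u(s)<0$ for all $s\in\,]A,s_1]$.
   Context: Primes denote derivatives with respect to the independent variable $s$. Maximal to the left means the solution admits no extension to an interval $]\hat A,0]$ with $\hat A<A$. *)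

(* Defs.v *)
From Stdlib Require Import Reals Lra ClassicalEpsilon.
From Coquelicot Require Import Coquelicot.
Open Scope R_scope.

(* The limit of delta at 0+ (it exists under the hypotheses of the lemma). *)
Definition delta0 (delta : R -> R) : R :=
  epsilon (inhabits 0) (fun l => filterlim delta (at_right 0) (locally l)).

(* Extension of delta to [0, +oo[ by its right limit at 0, so that
   u |-> delta_ext delta (u^2) is the continuous extension of u |-> delta(u^2). *)
Definition delta_ext (delta : R -> R) (r : R) : R :=
  if Rlt_dec 0 r then delta r else delta0 delta.

(* f' is the derivative of f on the set D, relative to D
   (one-sided at endpoints of D belonging to D). *)
Definition has_deriv_on (D : R -> Prop) (f f' : R -> R) : Prop :=
  forall s, D s ->
    filterlim (fun t => (f t - f s) / (t - s))
      (within (fun t => D t /\ t <> s) (locally s)) (locally (f' s)).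

Definition left_int (a : Rbar) (s : R) : Prop := Rbar_lt a (Finite s) /\ s <= 0.

Definition is_solution (delta : R -> R) (a : Rbar) (u du E : R -> R) : Prop :=
  exists ddu dE : R -> R,
    has_deriv_on (left_int a) u du /\
    has_deriv_on (left_int a) du ddu /\
    has_deriv_on (left_int a) E dE /\
    forall s, left_int a s ->
      ddu s + delta_ext delta (u s ^ 2) * u s ^ 2 * du s = E s * u s / 2 /\
      dE s = - 4 * delta_ext delta (u s ^ 2) * du s ^ 2.

Definition on_M (a : Rbar) (u du E : R -> R) : Prop :=
  forall s, left_int a s -> 2 * du s ^ 2 - E s * u s ^ 2 = 1.

Definition maximal_left (delta : R -> R) (a : Rbar) (u du E : R -> R) : Prop :=
  ~ exists (a' : Rbar) (v dv F : R -> R),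
      Rbar_lt a' a /\ is_solution delta a' v dv F /\
      forall s, left_int a s -> v s = u s /\ F s = E s.

(* Main.v *)
Require Import Defs.
From Stdlib Require Import Reals Lra Lia ClassicalEpsilon Classical.
From Coquelicot Require Import Coquelicot.
Open Scope R_scope.


Lemma ball_R (x e y : R) : ball x e y <-> Rabs (y - x) < e.
Proof. unfold ball; simpl; unfold AbsRing_ball, abs, minus, plus, opp; simpl. tauto. Qed.

Lemma hd_eps (D : R -> Prop) f f' :
  has_deriv_on D f f' <->
  forall s, D s -> forall eps, 0 < eps -> exists d, 0 < d /\
    forall t, D t -> t <> s -> Rabs (t - s) < d ->
      Rabs ((f t - f s) / (t - s) - f' s) < eps.
Proof.
  split.
  - intros H s Ds eps He. specialize (H s Ds).
    apply filterlim_locally with (eps := mkposreal eps He) in H.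
    destruct H as [d Hd]. exists d. split; [apply cond_pos|].
    intros t Dt ts Hts. apply ball_R. apply (Hd t). apply ball_R. exact Hts. auto.
  - intros H s Ds. apply filterlim_locally. intros eps.
    destruct (H s Ds eps (cond_pos eps)) as [d [Hd Hd']].
    exists (mkposreal d Hd). intros t Ht [Dt ts]. apply ball_R.
    apply ball_R in Ht. apply Hd'; auto.
Qed.

Lemma hd_interior (D : R -> Prop) f f' s r :
  has_deriv_on D f f' -> D s -> 0 < r -> (forall t, Rabs (t - s) < r -> D t) ->
  is_derive f s (f' s).
Proof.
  intros H Ds Hr HD. apply is_derive_Reals. intros eps He.
  destruct (proj1 (hd_eps D f f') H s Ds eps He) as [d [Hd Hd']].
  assert (Hm : 0 < Rmin d r) by (apply Rmin_pos; auto).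
  exists (mkposreal _ Hm). intros h h0 Hh. simpl in Hh.
  replace h with ((s + h) - s) at 2 by ring.
  apply Hd'.
  - apply HD. replace (s + h - s) with h by ring. apply Rlt_le_trans with (1 := Hh), Rmin_r.
  - intro E. apply h0. lra.
  - replace (s + h - s) with h by ring. apply Rlt_le_trans with (1 := Hh), Rmin_l.
Qed.

Lemma deriv_eps (f : R -> R) (s l : R) : is_derive f s l -> forall eps, 0 < eps -> exists d, 0 < d /\
  forall t, t <> s -> Rabs (t - s) < d -> Rabs ((f t - f s) / (t - s) - l) < eps.
Proof.
  intros H eps He. apply is_derive_Reals in H. destruct (H eps He) as [d Hd].
  exists d. split; [apply cond_pos|]. intros t ts Ht.
  specialize (Hd (t - s)). replace (s + (t - s)) with t in Hd by ring. apply Hd; auto.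
  intro E; apply ts; lra.
Qed.

Lemma lip_cont f C x : (forall y z, Rabs (f y - f z) <= C * Rabs (y - z)) -> continuous f x.
Proof.
  intros H. apply filterlim_locally. intros eps.
  assert (Hp : 0 < eps / (Rabs C + 1)).
  { apply Rdiv_lt_0_compat. apply cond_pos. pose proof (Rabs_pos C); lra. }
  exists (mkposreal _ Hp). intros y Hy. apply ball_R in Hy. apply ball_R. change (Rabs (y - x) < eps / (Rabs C + 1)) in Hy.
  eapply Rle_lt_trans. apply H.
  apply Rle_lt_trans with (Rabs C * Rabs (y - x)).
  apply Rmult_le_compat_r. apply Rabs_pos. apply Rle_abs.
  pose proof (Rabs_pos C). pose proof (Rabs_pos (y - x)). pose proof (cond_pos eps).
  apply Rmult_lt_compat_r with (r := Rabs C + 1) in Hy; [|lra].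
  unfold Rdiv in Hy. rewrite Rmult_assoc, Rinv_l, Rmult_1_r in Hy by lra. nra.
Qed.

Lemma mvt_cl (f f' : R -> R) (x y : R) : x <= y ->
  (forall z, x <= z <= y -> is_derive f z (f' z)) ->
  exists c, x <= c <= y /\ f y - f x = f' c * (y - x).
Proof.
  intros Hxy H. destruct (MVT_gen f x y f') as [c [Hc E]].
  - intros z Hz. apply H. rewrite Rmin_left, Rmax_right in Hz by lra. lra.
  - intros z Hz. rewrite Rmin_left, Rmax_right in Hz by lra.
    apply continuity_pt_filterlim. apply (ex_derive_continuous (K := R_AbsRing) (V := R_NormedModule)). eexists. apply H; lra.
  - rewrite Rmin_left, Rmax_right in Hc by lra. exists c; auto.
Qed.

Lemma mono_cl (f f' : R -> R) (x y : R) : x <= y ->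
  (forall z, x <= z <= y -> is_derive f z (f' z) /\ 0 <= f' z) -> f x <= f y.
Proof.
  intros Hxy H. destruct (mvt_cl f f' x y Hxy) as [c [Hc E]].
  intros; apply H; auto. assert (0 <= f' c) by (apply H; auto). nra.
Qed.

Lemma lip_cl (f f' : R -> R) (K x y : R) : x <= y ->
  (forall z, x <= z <= y -> is_derive f z (f' z) /\ Rabs (f' z) <= K) ->
  Rabs (f y - f x) <= K * (y - x).
Proof.
  intros Hxy H. destruct (mvt_cl f f' x y Hxy) as [c [Hc E]].
  intros; apply H; auto. rewrite E, Rabs_mult, (Rabs_right (y - x)) by lra.
  apply Rmult_le_compat_r. lra. apply H; auto.
Qed.

Lemma small_le a b C r : 0 < r -> (forall y, 0 < y < r -> a <= b + C * y) -> a <= b.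
Proof.
  intros Hr H. destruct (Rle_or_lt a b) as [|Hab]; auto.
  set (y := Rmin (r / 2) ((a - b) / (2 * (Rabs C + 1)))).
  assert (Hy1 : y <= r / 2) by apply Rmin_l.
  assert (Hy2 : y <= (a - b) / (2 * (Rabs C + 1))) by apply Rmin_r.
  assert (HC := Rabs_pos C).
  assert (Hy0 : 0 < y). { apply Rmin_pos. lra. apply Rdiv_lt_0_compat; lra. }
  specialize (H y ltac:(lra)).
  assert (C * y <= Rabs C * y) by (apply Rmult_le_compat_r; [lra|apply Rle_abs]).
  assert ((Rabs C + 1) * y <= (a - b) / 2).
  { apply Rmult_le_compat_l with (r := Rabs C + 1) in Hy2; [|lra].
    replace ((Rabs C + 1) * ((a - b) / (2 * (Rabs C + 1)))) with ((a - b) / 2) in Hy2 by (field; lra). lra. }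
  nra.
Qed.

Lemma Rabs_le_inv x a : Rabs x <= a -> - a <= x <= a.
Proof. intros H. pose proof (Rle_abs x). pose proof (Rle_abs (- x)). rewrite Rabs_Ropp in H1. lra. Qed.

Lemma le_eps p q : (forall h, 0 < h -> p <= q + h) -> p <= q.
Proof. intros H. apply (small_le p q 1 1); [lra|]. intros y Hy. rewrite Rmult_1_l. apply H; lra. Qed.

Lemma small_inv (r : R) : 0 < r -> exists N : nat, forall n, (N <= n)%nat -> / (INR n + 1) < r.
Proof.
  intros Hr. destruct (INR_unbounded (/ r)) as [N HN]. exists N. intros n Hn.
  apply le_INR in Hn. pose proof (pos_INR N).
  rewrite <- (Rinv_inv r). apply Rinv_lt_contravar.
  apply Rmult_lt_0_compat. apply Rinv_0_lt_compat; auto. lra. lra.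
Qed.

Lemma Llim (g : R -> R) (a c K : R) : a < c -> 0 <= K ->
  (forall x y, a < x <= c -> a < y <= c -> Rabs (g x - g y) <= K * Rabs (x - y)) ->
  exists L, forall x, a < x <= c -> Rabs (g x - L) <= K * (x - a).
Proof.
  intros Hac HK H.
  set (xs := fun n : nat => a + (c - a) * / (INR n + 1)).
  assert (Hxs : forall n, a < xs n <= c).
  { intros n. unfold xs. pose proof (pos_INR n).
    assert (0 < / (INR n + 1)) by (apply Rinv_0_lt_compat; lra).
    assert (/ (INR n + 1) <= 1).
    { rewrite <- Rinv_1. apply Rinv_le_contravar; lra. }
    split; nra. }
  assert (Hc : ex_lim_seq_cauchy (fun n => g (xs n))).
  { intros eps. destruct (small_inv (eps / (2 * (K + 1) * (c - a)))) as [N HN].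
    { apply Rdiv_lt_0_compat. apply cond_pos. nra. }
    exists N. intros n m Hn Hm.
    eapply Rle_lt_trans. apply H; apply Hxs.
    unfold xs. replace (a + (c - a) * / (INR n + 1) - (a + (c - a) * / (INR m + 1)))
      with ((c - a) * (/ (INR n + 1) - / (INR m + 1))) by ring.
    specialize (HN n Hn) as Hn'. specialize (HN m Hm) as Hm'.
    pose proof (pos_INR n). pose proof (pos_INR m).
    assert (0 < / (INR n + 1)) by (apply Rinv_0_lt_compat; lra).
    assert (0 < / (INR m + 1)) by (apply Rinv_0_lt_compat; lra).
    rewrite Rabs_mult, Rabs_right by lra.
    assert (Rabs (/ (INR n + 1) - / (INR m + 1)) < eps / (2 * (K + 1) * (c - a))).
    { apply Rabs_def1; lra. }
    set (q := eps / (2 * (K + 1) * (c - a))) in *.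
    assert (Hq : q * (2 * (K + 1) * (c - a)) = eps) by (unfold q; field; nra).
    pose proof (cond_pos eps). pose proof (Rabs_pos (/ (INR n + 1) - / (INR m + 1))).
    assert (K * ((c - a) * Rabs (/ (INR n + 1) - / (INR m + 1))) <= (K + 1) * ((c - a) * q)).
    { apply Rmult_le_compat; try lra. apply Rmult_le_pos; lra. apply Rmult_le_compat_l; lra. }
    nra. }
  apply ex_lim_seq_cauchy_corr in Hc.
  pose proof (Lim_seq_correct' _ Hc) as HL. set (L := Lim_seq _) in HL.
  exists L. intros x Hx. apply le_eps. intros h Hh.
  apply is_lim_seq_Reals in HL.
  destruct (HL (h / 2)) as [N1 HN1]. lra.
  destruct (small_inv (h / (2 * (K + 1) * (c - a)))) as [N2 HN2].
  { apply Rdiv_lt_0_compat. lra. nra. }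
  set (n := (N1 + N2)%nat).
  specialize (HN1 n ltac:(unfold n; lia)). specialize (HN2 n ltac:(unfold n; lia)).
  unfold R_dist in HN1.
  assert (Hg := H x (xs n) Hx (Hxs n)).
  assert (Rabs (x - xs n) <= (x - a) + (c - a) * / (INR n + 1)).
  { unfold xs. pose proof (pos_INR n).
    assert (0 < / (INR n + 1)) by (apply Rinv_0_lt_compat; lra).
    apply Rabs_le; split; nra. }
  assert (K * ((c - a) * / (INR n + 1)) <= h / 2).
  { set (q := h / (2 * (K + 1) * (c - a))) in *.
    assert (Hq : q * (2 * (K + 1) * (c - a)) = h) by (unfold q; field; nra).
    pose proof (pos_INR n).
    assert (0 < / (INR n + 1)) by (apply Rinv_0_lt_compat; lra).
    assert (K * ((c - a) * / (INR n + 1)) <= (K + 1) * ((c - a) * q)).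
    { apply Rmult_le_compat; try lra. apply Rmult_le_pos; lra. apply Rmult_le_compat_l; lra. }
    nra. }
  replace (g x - L) with ((g x - g (xs n)) + (g (xs n) - L)) by ring.
  eapply Rle_trans. apply Rabs_triang.
  assert (K * Rabs (x - xs n) <= K * ((x - a) + (c - a) * / (INR n + 1))) by (apply Rmult_le_compat_l; auto).
  lra.
Qed.

Lemma GB (delta : R -> R)
  (Hcont : forall r, 0 < r -> continuous (Derive delta) r)
  (Hlim : filterlim (fun r => sqrt r * Derive delta r) (at_right 0) (locally 0))
  (R0 : R) : 0 < R0 -> exists G, 0 <= G /\
    forall r, 0 < r <= R0 -> Rabs (sqrt r * Derive delta r) <= G.
Proof.
  intros HR0.
  apply filterlim_locally with (eps := mkposreal 1 Rlt_0_1) in Hlim.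
  destruct Hlim as [eta Heta].
  set (a := Rmin (eta / 2) R0).
  assert (Ha : 0 < a) by (apply Rmin_pos; [pose proof (cond_pos eta); lra | lra]).
  assert (Har : a <= R0) by apply Rmin_r.
  set (g := fun r => Rabs (sqrt r * Derive delta r)).
  destruct (continuity_ab_maj g a R0 Har) as [Mx [HMx HMxr]].
  { intros c Hc. unfold g.
    apply (continuity_pt_comp (fun r => sqrt r * Derive delta r) Rabs).
    apply (continuity_pt_mult sqrt (Derive delta)).
    apply continuity_pt_sqrt; lra.
    apply continuity_pt_filterlim. apply Hcont. lra.
    apply Rcontinuity_abs. }
  exists (Rmax 1 (g Mx)). split. apply Rle_trans with 1. lra. apply Rmax_l.
  intros r Hr. destruct (Rle_or_lt a r) as [Hra | Hra].
  - eapply Rle_trans. apply (HMx r). lra. apply Rmax_r.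
  - eapply Rle_trans; [|apply Rmax_l].
    assert (Hb : ball 0 eta r).
    { apply ball_R. rewrite Rminus_0_r, Rabs_right by lra.
      assert (a <= eta / 2) by apply Rmin_l. pose proof (cond_pos eta). lra. }
    specialize (Heta r Hb ltac:(lra)). apply ball_R in Heta. change (Rabs (sqrt r * Derive delta r - 0) < 1) in Heta. rewrite Rminus_0_r in Heta. unfold g. lra.
Qed.

Lemma h_deriv (delta : R -> R) (Hder : forall r, 0 < r -> ex_derive delta r) (x : R) :
  0 < x -> is_derive (fun z => delta (z * z)) x (2 * x * Derive delta (x * x)).
Proof.
  intros Hx.
  assert (H1 : is_derive delta (x * x) (Derive delta (x * x))).
  { apply Derive_correct. apply Hder. nra. }
  assert (H2 : is_derive (fun z : R => z * z) x (2 * x)).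
  { auto_derive. auto. ring. }
  pose proof (is_derive_comp delta (fun z => z * z) x _ _ H1 H2) as H.
  simpl in H. unfold scal in H; simpl in H. unfold mult in H; simpl in H.
  replace (2 * x * Derive delta (x * x)) with (2 * x * Derive delta (x * x)) by ring. exact H.
Qed.

Lemma h_lip (delta : R -> R)
  (Hder : forall r, 0 < r -> ex_derive delta r)
  (Hcont : forall r, 0 < r -> continuous (Derive delta) r)
  (Hlim : filterlim (fun r => sqrt r * Derive delta r) (at_right 0) (locally 0))
  (Rb : R) : 0 < Rb -> exists G, 0 <= G /\
    forall x y, 0 < x <= Rb -> 0 < y <= Rb ->
      Rabs (delta (x * x) - delta (y * y)) <= 2 * G * Rabs (x - y).
Proof.
  intros HRb. destruct (GB delta Hcont Hlim (Rb * Rb)) as [G [HG0 HG]]. nra.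
  exists G. split; auto.
  assert (Hm : forall x y, 0 < x <= Rb -> 0 < y <= Rb -> x <= y ->
      Rabs (delta (x * x) - delta (y * y)) <= 2 * G * Rabs (x - y)).
  { intros x y Hx Hy Hxy. rewrite Rabs_minus_sym, (Rabs_minus_sym x), (Rabs_right (y - x)) by lra.
    apply (lip_cl (fun z => delta (z * z)) (fun z => 2 * z * Derive delta (z * z))); auto.
    intros z Hz. split. apply h_deriv; auto. lra.
    assert (Hs : sqrt (z * z) = z) by (apply sqrt_square; lra).
    specialize (HG (z * z) ltac:(split; nra)). rewrite Hs in HG.
    replace (2 * z * Derive delta (z * z)) with (2 * (z * Derive delta (z * z))) by ring.
    rewrite Rabs_mult, (Rabs_right 2) by lra. lra. }
  intros x y Hx Hy. destruct (Rle_or_lt x y).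
  - apply Hm; auto.
  - rewrite Rabs_minus_sym, (Rabs_minus_sym x). apply Hm; auto; lra.
Qed.

Lemma delta_lim (delta : R -> R)
  (Hder : forall r, 0 < r -> ex_derive delta r)
  (Hcont : forall r, 0 < r -> continuous (Derive delta) r)
  (Hlim : filterlim (fun r => sqrt r * Derive delta r) (at_right 0) (locally 0))
  (Rb : R) : 0 < Rb -> exists G, 0 <= G /\
    (forall x y, 0 < x <= Rb -> 0 < y <= Rb ->
      Rabs (delta (x * x) - delta (y * y)) <= 2 * G * Rabs (x - y)) /\
    (forall x, 0 < x <= Rb -> Rabs (delta (x * x) - delta0 delta) <= 2 * G * x).
Proof.
  intros HRb. destruct (h_lip delta Hder Hcont Hlim Rb HRb) as [G [HG0 HG]].
  destruct (Llim (fun z => delta (z * z)) 0 Rb (2 * G) HRb ltac:(lra) HG) as [L HL].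
  exists G. split; auto. split; auto.
  assert (HfL : filterlim delta (at_right 0) (locally L)).
  { apply filterlim_locally. intros eps.
    set (e := eps / (2 * G + 1)).
    assert (He : 0 < e) by (apply Rdiv_lt_0_compat; [apply cond_pos | lra]).
    assert (Hm : 0 < Rmin (Rb * Rb) (e * e)) by (apply Rmin_pos; nra).
    exists (mkposreal _ Hm). intros r Hr Hr0. apply ball_R in Hr. change (Rabs (r - 0) < Rmin (Rb * Rb) (e * e)) in Hr.
    rewrite Rminus_0_r, Rabs_right in Hr by lra.
    assert (Hsr : sqrt r * sqrt r = r) by (apply sqrt_sqrt; lra).
    assert (Hs0 : 0 < sqrt r) by (apply sqrt_lt_R0; lra).
    assert (Hs1 : sqrt r <= Rb).
    { rewrite <- (sqrt_square Rb) by lra. apply sqrt_le_1_alt.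
      pose proof (Rmin_l (Rb * Rb) (e * e)). lra. }
    assert (Hs2 : sqrt r < e).
    { rewrite <- (sqrt_square e) by lra. apply sqrt_lt_1_alt.
      pose proof (Rmin_r (Rb * Rb) (e * e)). lra. }
    specialize (HL (sqrt r) ltac:(lra)). rewrite Hsr, Rminus_0_r in HL.
    apply ball_R.
    assert (2 * G * sqrt r <= 2 * G * e) by (apply Rmult_le_compat_l; lra).
    assert (Hee : e * (2 * G + 1) = eps) by (unfold e; field; lra).
    pose proof (cond_pos eps). nra. }
  assert (H0 : filterlim delta (at_right 0) (locally (delta0 delta))).
  { unfold delta0. apply (epsilon_spec (inhabits 0) (fun l => filterlim delta (at_right 0) (locally l))).
    exists L. exact HfL. }
  assert (E : delta0 delta = L).
  { apply (@filterlim_locally_unique R R_AbsRing R_NormedModule (at_right 0) (Proper_StrongProper _ (at_right_proper_filter 0)) delta); assumption. }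
  rewrite E. intros x Hx. specialize (HL x Hx). rewrite Rminus_0_r in HL. exact HL.
Qed.

Definition Hf (delta : R -> R) (x : R) := delta_ext delta (x ^ 2).

Lemma Hf_props (delta : R -> R)
  (Hnonneg : forall r, 0 < r -> 0 <= delta r)
  (M : R) (HM : forall r, 0 < r -> Rabs (delta r) <= M)
  (Hder : forall r, 0 < r -> ex_derive delta r)
  (Hcont : forall r, 0 < r -> continuous (Derive delta) r)
  (Hlim : filterlim (fun r => sqrt r * Derive delta r) (at_right 0) (locally 0)) :
  (forall x, 0 <= Hf delta x <= M) /\
  (forall Rb, 0 < Rb -> exists G, 0 <= G /\ forall x y, Rabs x <= Rb -> Rabs y <= Rb ->
      Rabs (Hf delta x - Hf delta y) <= 2 * G * Rabs (x - y)).
Proof.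
  destruct (delta_lim delta Hder Hcont Hlim 1 Rlt_0_1) as [G1 [HG1 [_ HL1]]].
  assert (Hd0 : 0 <= delta0 delta <= M).
  { split.
    - apply (small_le 0 (delta0 delta) (2 * G1) 1). lra. intros y Hy.
      specialize (HL1 y ltac:(lra)). specialize (Hnonneg (y * y) ltac:(nra)).
      apply Rabs_le_inv in HL1. lra.
    - apply (small_le (delta0 delta) M (2 * G1) 1). lra. intros y Hy.
      specialize (HL1 y ltac:(lra)). specialize (HM (y * y) ltac:(nra)).
      apply Rabs_le_inv in HL1. apply Rabs_le_inv in HM. lra. }
  assert (Hx2 : forall x, x <> 0 -> Hf delta x = delta (Rabs x * Rabs x)).
  { intros x Hx. unfold Hf, delta_ext.
    assert (Hp : 0 < x ^ 2) by (apply pow2_gt_0; auto).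
    destruct (Rlt_dec 0 (x ^ 2)); [|lra]. f_equal. rewrite <- Rabs_mult. rewrite Rabs_right; [ring|]. nra. }
  assert (Hx0 : Hf delta 0 = delta0 delta).
  { unfold Hf, delta_ext. destruct (Rlt_dec 0 (0 ^ 2)); auto. simpl in r. lra. }
  split.
  - intros x. destruct (Req_dec x 0) as [->|Hx]. rewrite Hx0; auto.
    rewrite Hx2 by auto. assert (0 < Rabs x) by (apply Rabs_pos_lt; auto).
    split. apply Hnonneg; nra. specialize (HM (Rabs x * Rabs x) ltac:(nra)). apply Rabs_le_inv in HM. lra.
  - intros Rb HRb. destruct (delta_lim delta Hder Hcont Hlim Rb HRb) as [G [HG [HLip HL]]].
    exists G. split; auto. intros x y Hx Hy.
    destruct (Req_dec x 0) as [->|Hxn]; destruct (Req_dec y 0) as [->|Hyn].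
    + rewrite !Rminus_diag, !Rabs_R0. nra.
    + rewrite Hx0, Hx2 by auto. rewrite Rabs_minus_sym. rewrite Rminus_0_l, Rabs_Ropp.
      apply HL. split; auto. apply Rabs_pos_lt; auto.
    + rewrite Hx0, Hx2 by auto. rewrite Rminus_0_r.
      apply HL. split; auto. apply Rabs_pos_lt; auto.
    + rewrite !Hx2 by auto. eapply Rle_trans. apply HLip.
      split; auto. apply Rabs_pos_lt; auto. split; auto. apply Rabs_pos_lt; auto.
      apply Rmult_le_compat_l. lra. apply Rabs_triang_inv2.
Qed.

Lemma RInt_abs_bound (g : R -> R) a b M : ex_RInt g a b ->
  (forall z, Rmin a b <= z <= Rmax a b -> Rabs (g z) <= M) ->
  Rabs (RInt g a b) <= Rabs (b - a) * M.
Proof.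
  intros Hex H. apply (norm_RInt_le_const_abs (V := R_NormedModule) g a b); auto.
  apply (RInt_correct (V := R_CompleteNormedModule)); auto.
Qed.

Lemma ex_RInt_cont (g : R -> R) a b : (forall z, continuous g z) -> ex_RInt g a b.
Proof. intros H. apply (ex_RInt_continuous (V := R_CompleteNormedModule)). intros; apply H. Qed.

Lemma RInt_diff (g : R -> R) a b c : (forall z, continuous g z) ->
  RInt g a c - RInt g a b = RInt g b c.
Proof.
  intros H. rewrite <- (RInt_Chasles (V := R_CompleteNormedModule) g a b c) by (apply ex_RInt_cont; auto).
  change (RInt g a b + RInt g b c - RInt g a b = RInt g b c). ring.
Qed.

Lemma RInt_sub (g h : R -> R) a b : (forall z, continuous g z) -> (forall z, continuous h z) ->
  RInt (fun s => g s - h s) a b = RInt g a b - RInt h a b.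
Proof.
  intros Hg Hh. apply (RInt_minus (V := R_CompleteNormedModule)); apply ex_RInt_cont; auto.
Qed.

Lemma lim_bound (u : nat -> R) (l c B : R) (N : nat) : is_lim_seq u l ->
  (forall k, (N <= k)%nat -> Rabs (u k - c) <= B) -> Rabs (l - c) <= B.
Proof.
  intros Hl H. apply (is_lim_seq_incr_n _ N) in Hl.
  assert (H2 := is_lim_seq_abs _ _ (is_lim_seq_minus' _ _ _ _ Hl (is_lim_seq_const c))).
  assert (H3 := is_lim_seq_le _ _ _ _ (fun k => H (k + N)%nat ltac:(lia)) H2 (is_lim_seq_const B)).
  simpl in H3. exact H3.
Qed.

Lemma lim_bound2 (u v : nat -> R) (l1 l2 B : R) : is_lim_seq u l1 -> is_lim_seq v l2 ->
  (forall k, Rabs (u k - v k) <= B) -> Rabs (l1 - l2) <= B.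
Proof.
  intros H1 H2 H.
  assert (H4 := is_lim_seq_abs _ _ (is_lim_seq_minus' _ _ _ _ H1 H2)).
  assert (H3 := is_lim_seq_le _ _ _ _ H H4 (is_lim_seq_const B)).
  simpl in H3. exact H3.
Qed.

Lemma half_pow_le (n N : nat) : (N <= n)%nat -> (/ 2) ^ n <= (/ 2) ^ N.
Proof.
  intros H. replace n with (N + (n - N))%nat by lia. rewrite pow_add.
  assert (0 <= (/2) ^ N) by (apply pow_le; lra).
  assert ((/2) ^ (n - N) <= 1).
  { induction (n - N)%nat. simpl; lra. simpl. assert (0 <= (/2) ^ n0) by (apply pow_le; lra). lra. }
  nra.
Qed.

Lemma lim_zero (u : nat -> R) (l C : R) : is_lim_seq u l ->
  (forall n, Rabs (u n) <= C * (/ 2) ^ n) -> l = 0.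
Proof.
  intros Hl H.
  assert (H4 := is_lim_seq_abs _ _ Hl).
  assert (H5 := is_lim_seq_scal_l _ C _ (is_lim_seq_geom (/ 2) ltac:(rewrite Rabs_right; lra))).
  assert (H3 := is_lim_seq_le _ _ _ _ H H4 H5).
  simpl in H3. rewrite Rmult_0_r in H3. pose proof (Rabs_pos l).
  destruct (Req_dec l 0); auto. assert (0 < Rabs l) by (apply Rabs_pos_lt; auto). lra.
Qed.

Fixpoint pic (F : nat -> R -> R -> R -> R) (x : nat -> R) (A : R) (n : nat) : nat -> R -> R :=
  match n with
  | O => fun i _ => x i
  | S m => fun i t => x i + RInt (fun s => F i (pic F x A m 0%nat s) (pic F x A m 1%nat s) (pic F x A m 2%nat s)) A t
  end.

Section Picard.
Variables (F : nat -> R -> R -> R -> R) (x : nat -> R) (A eps K L : R).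
Hypotheses (HK : 0 <= K) (HL : 0 <= L) (Heps : 0 < eps) (Hc : 3 * L * eps <= / 2)
  (HFb : forall i a b c, Rabs (F i a b c) <= K)
  (HFl : forall i a b c a' b' c', Rabs (F i a b c - F i a' b' c') <= L * (Rabs (a - a') + Rabs (b - b') + Rabs (c - c'))).

Let P := pic F x A.

Lemma comp_cont (X : nat -> R -> R) i :
  (forall j t t', Rabs (X j t - X j t') <= K * Rabs (t - t')) ->
  forall z, continuous (fun s => F i (X 0%nat s) (X 1%nat s) (X 2%nat s)) z.
Proof.
  intros HX z. apply (lip_cont _ (L * (3 * K))). intros y w.
  eapply Rle_trans. apply HFl. rewrite Rmult_assoc. apply Rmult_le_compat_l; auto.
  pose proof (HX 0%nat y w). pose proof (HX 1%nat y w). pose proof (HX 2%nat y w). lra.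
Qed.

Lemma pic_lip n : forall j t t', Rabs (P n j t - P n j t') <= K * Rabs (t - t').
Proof.
  induction n as [|n IH]; intros j t t'.
  - simpl. rewrite Rminus_diag, Rabs_R0. apply Rmult_le_pos; auto; apply Rabs_pos.
  - unfold P; simpl. fold P.
    replace (x j + RInt (fun s => F j (P n 0%nat s) (P n 1%nat s) (P n 2%nat s)) A t -
      (x j + RInt (fun s => F j (P n 0%nat s) (P n 1%nat s) (P n 2%nat s)) A t'))
      with (RInt (fun s => F j (P n 0%nat s) (P n 1%nat s) (P n 2%nat s)) A t -
      RInt (fun s => F j (P n 0%nat s) (P n 1%nat s) (P n 2%nat s)) A t') by ring.
    rewrite RInt_diff by (apply comp_cont; auto).
    rewrite Rmult_comm. apply RInt_abs_bound. apply ex_RInt_cont, comp_cont; auto.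
    intros; apply HFb.
Qed.

Lemma pic_cont n i : forall z, continuous (fun s => F i (P n 0%nat s) (P n 1%nat s) (P n 2%nat s)) z.
Proof. apply comp_cont, pic_lip. Qed.

Lemma pic_contr n : forall t, A - eps <= t <= A -> forall i,
  Rabs (P (S n) i t - P n i t) <= K * eps * (/ 2) ^ n.
Proof.
  induction n as [|n IH]; intros t Ht i.
  - unfold P; simpl. assert (Hab : forall a b : R, a + b - a = b) by (intros; ring). rewrite Hab.
    eapply Rle_trans. apply RInt_abs_bound. apply ex_RInt_cont. intros; apply continuous_const.
    intros; apply HFb. rewrite Rabs_left1 by lra. nra.
  - unfold P; simpl. fold P.
    set (g1 := fun s => F i (P (S n) 0%nat s) (P (S n) 1%nat s) (P (S n) 2%nat s)).
    set (g0 := fun s => F i (P n 0%nat s) (P n 1%nat s) (P n 2%nat s)).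
    change (Rabs (x i + RInt g1 A t - (x i + RInt g0 A t)) <= K * eps * (/ 2 * (/ 2) ^ n)).
    replace (x i + RInt g1 A t - (x i + RInt g0 A t)) with (RInt g1 A t - RInt g0 A t) by ring.
    rewrite <- RInt_sub by (unfold g0, g1; apply pic_cont).
    eapply Rle_trans. apply RInt_abs_bound.
    apply ex_RInt_cont. intros z. apply (continuous_minus (V := R_NormedModule)); unfold g0, g1; apply pic_cont.
    + intros z Hz. rewrite Rmin_right, Rmax_left in Hz by lra.
      unfold g0, g1. eapply Rle_trans. apply HFl.
      assert (Hz' : A - eps <= z <= A) by lra.
      pose proof (IH z Hz' 0%nat). pose proof (IH z Hz' 1%nat). pose proof (IH z Hz' 2%nat).
      apply Rmult_le_compat_l with (r := L) in H; auto.
      apply Rmult_le_compat_l with (r := L) in H0; auto.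
      apply Rmult_le_compat_l with (r := L) in H1; auto.
      rewrite !Rmult_plus_distr_l. exact (Rle_refl _) || (apply Rle_trans with (L * (K * eps * (/2)^n) * 3); [lra| apply Rle_refl]).
    + rewrite Rabs_left1 by lra.
      assert (0 <= (/2) ^ n) by (apply pow_le; lra).
      assert (0 <= K * eps * (/ 2) ^ n) by (apply Rmult_le_pos; [nra|auto]).
      assert (0 <= A - t <= eps) by lra.
      apply Rle_trans with (eps * (L * (K * eps * (/ 2) ^ n) * 3)).
      apply Rmult_le_compat_r. nra. lra.
      nra.
Qed.


Lemma pic_tail n k : forall t, A - eps <= t <= A -> forall i,
  Rabs (P (n + k) i t - P n i t) <= 2 * K * eps * (/ 2) ^ n - 2 * K * eps * (/ 2) ^ (n + k).
Proof.
  intros t Ht i. induction k as [|k IH].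
  - rewrite Nat.add_0_r, Rminus_diag, Rabs_R0. lra.
  - replace (n + S k)%nat with (S (n + k)) by lia.
    replace (P (S (n + k)) i t - P n i t) with ((P (S (n + k)) i t - P (n + k) i t) + (P (n + k) i t - P n i t)) by ring.
    eapply Rle_trans. apply Rabs_triang.
    pose proof (pic_contr (n + k) t Ht i). simpl pow.
    lra.
Qed.

Lemma pic_cauchy t i : A - eps <= t <= A -> ex_finite_lim_seq (fun n => P n i t).
Proof.
  intros Ht. apply ex_lim_seq_cauchy_corr. intros e.
  assert (Hg := is_lim_seq_geom (/ 2) ltac:(rewrite Rabs_right; lra)).
  apply is_lim_seq_Reals in Hg.
  destruct (Hg (e / (2 * K * eps + 1))) as [N HN].
  { apply Rdiv_lt_0_compat. apply cond_pos. nra. }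
  exists N. intros n m Hn Hm.
  assert (HNb : (/ 2) ^ N < e / (2 * K * eps + 1)).
  { specialize (HN N (le_n N)). unfold R_dist in HN. rewrite Rminus_0_r, Rabs_right in HN; auto.
    apply Rle_ge, pow_le; lra. }
  assert (Hq : e / (2 * K * eps + 1) * (2 * K * eps + 1) = e) by (field; nra).
  assert (Hb : forall p q, (N <= p)%nat -> (p <= q)%nat -> Rabs (P q i t - P p i t) < e).
  { intros p q Hp Hpq. replace q with (p + (q - p))%nat by lia.
    eapply Rle_lt_trans. apply pic_tail; auto.
    assert (0 <= (/ 2) ^ (p + (q - p))) by (apply pow_le; lra).
    pose proof (half_pow_le p N Hp).
    assert (0 <= 2 * K * eps) by nra. pose proof (cond_pos e).
    assert (2 * K * eps * (/ 2) ^ p <= 2 * K * eps * (/2) ^ N) by (apply Rmult_le_compat_l; auto).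
    assert (0 <= (/2)^N) by (apply pow_le; lra).
    assert (2 * K * eps * (/2) ^ N <= (2 * K * eps + 1) * (/2) ^ N) by nra.
    assert ((2 * K * eps + 1) * (/2) ^ N < (2 * K * eps + 1) * (e / (2 * K * eps + 1))) by (apply Rmult_lt_compat_l; nra).
    assert (0 <= 2 * K * eps * (/ 2) ^ (p + (q - p))) by nra.
    nra. }
  destruct (Nat.le_ge_cases n m).
  - rewrite Rabs_minus_sym. apply Hb; auto.
  - apply Hb; auto.
Qed.

Definition ct (t : R) := Rmax (A - eps) (Rmin A t).

Lemma ct_id t : A - eps <= t <= A -> ct t = t.
Proof. intros H. unfold ct. rewrite Rmin_right by lra. rewrite Rmax_right; lra. Qed.

Lemma ct_range t : A - eps <= ct t <= A.
Proof. unfold ct, Rmax, Rmin. destruct (Rle_dec A t); destruct (Rle_dec (A - eps) _); lra. Qed.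

Lemma ct_lip t t' : Rabs (ct t - ct t') <= Rabs (t - t').
Proof.
  unfold ct, Rmax, Rmin. destruct (Rle_dec A t); destruct (Rle_dec A t');
  repeat (destruct (Rle_dec (A - eps) _)); apply Rabs_le; split;
  pose proof (Rle_abs (t - t')); pose proof (Rle_abs (- (t - t'))); rewrite Rabs_Ropp in *; lra.
Qed.

Definition X i t : R := real (Lim_seq (fun n => P n i (ct t))).

Lemma X_lim i t : is_lim_seq (fun n => P n i (ct t)) (X i t).
Proof. apply Lim_seq_correct'. apply pic_cauchy. apply ct_range. Qed.

Lemma X_lip i t t' : Rabs (X i t - X i t') <= K * Rabs (t - t').
Proof.
  eapply Rle_trans. apply (lim_bound2 _ _ _ _ _ (X_lim i t) (X_lim i t')).
  intros k. apply pic_lip. apply Rmult_le_compat_l; auto. apply ct_lip.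
Qed.

Lemma X_close n i t : A - eps <= t <= A -> Rabs (X i t - P n i t) <= 2 * K * eps * (/ 2) ^ n.
Proof.
  intros Ht. pose proof (X_lim i t) as H. rewrite ct_id in H by auto.
  apply (lim_bound _ _ _ _ n H). intros k Hk. replace k with (n + (k - n))%nat by lia.
  eapply Rle_trans. apply pic_tail; auto.
  assert (0 <= 2 * K * eps * (/ 2) ^ (n + (k - n))).
  { apply Rmult_le_pos. nra. apply pow_le; lra. }
  lra.
Qed.

Definition gX i s := F i (X 0%nat s) (X 1%nat s) (X 2%nat s).
Definition phi i t := x i + RInt (gX i) A t.

Lemma gX_cont i z : continuous (gX i) z.
Proof. apply comp_cont. apply X_lip. Qed.

Lemma phi_deriv i t : is_derive (phi i) t (gX i t).
Proof.
  assert (H : is_derive (fun t => RInt (gX i) A t) t (gX i t)).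
  { apply (is_derive_RInt (V := R_NormedModule) (gX i) (fun t => RInt (gX i) A t) A).
    exists (mkposreal 1 Rlt_0_1). intros b _. apply (RInt_correct (V := R_CompleteNormedModule)).
    apply ex_RInt_cont. apply gX_cont. apply gX_cont. }
  pose proof (is_derive_plus _ _ t _ _ (is_derive_const (x i) t) H) as H2.
  assert (E : plus zero (gX i t) = gX i t) by (apply (plus_zero_l (G := R_AbelianGroup))). unfold phi. rewrite <- E. exact H2.
Qed.

Lemma phi_eq i t : A - eps <= t <= A -> phi i t = X i t.
Proof.
  intros Ht.
  assert (Hl : is_lim_seq (fun n => phi i t - P (S n) i t) (phi i t - X i t)).
  { apply is_lim_seq_minus'. apply is_lim_seq_const.
    pose proof (X_lim i t) as H. rewrite ct_id in H by auto.
    apply is_lim_seq_incr_1 in H. exact H. }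
  apply Rminus_diag_uniq. apply (lim_zero _ _ (eps * (L * (3 * (2 * K * eps)))) Hl).
  intros n. unfold phi, P at 1; simpl. fold P.
  replace (x i + RInt (gX i) A t - (x i + RInt (fun s => F i (P n 0%nat s) (P n 1%nat s) (P n 2%nat s)) A t))
    with (RInt (gX i) A t - RInt (fun s => F i (P n 0%nat s) (P n 1%nat s) (P n 2%nat s)) A t) by ring.
  rewrite <- RInt_sub by (try apply gX_cont; apply pic_cont).
  eapply Rle_trans. apply RInt_abs_bound.
  apply ex_RInt_cont. intros z. apply (continuous_minus (V := R_NormedModule)). apply gX_cont. apply pic_cont.
  - intros z Hz. rewrite Rmin_right, Rmax_left in Hz by lra.
    unfold gX. eapply Rle_trans. apply HFl.
    assert (Hz' : A - eps <= z <= A) by lra.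
    pose proof (X_close n 0%nat z Hz'). pose proof (X_close n 1%nat z Hz'). pose proof (X_close n 2%nat z Hz').
    apply Rle_trans with (L * (3 * (2 * K * eps * (/ 2) ^ n))). apply Rmult_le_compat_l; auto. lra. apply Rle_refl.
  - rewrite Rabs_left1 by lra.
    assert (0 <= (/2) ^ n) by (apply pow_le; lra).
    assert (0 <= L * (3 * (2 * K * eps * (/ 2) ^ n))) by (apply Rmult_le_pos; auto; apply Rmult_le_pos; [lra|]; apply Rmult_le_pos; auto; apply Rmult_le_pos; [lra|]; lra).
    apply Rle_trans with (eps * (L * (3 * (2 * K * eps * (/ 2) ^ n)))).
    apply Rmult_le_compat_r; lra. right; ring.
Qed.

Lemma phi_A i : phi i A = x i.
Proof. unfold phi. rewrite RInt_point. unfold zero; simpl. ring. Qed.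

Lemma phi_near i t : Rabs (phi i t - x i) <= K * Rabs (t - A).
Proof.
  unfold phi. assert (Hab : forall a b : R, a + b - a = b) by (intros; ring). rewrite Hab.
  rewrite Rmult_comm. apply RInt_abs_bound. apply ex_RInt_cont, gX_cont.
  intros; apply HFb.
Qed.

Lemma gX_eq i t : A - eps <= t <= A -> gX i t = F i (phi 0%nat t) (phi 1%nat t) (phi 2%nat t).
Proof. intros Ht. unfold gX. rewrite !phi_eq by auto. reflexivity. Qed.

Lemma picard : exists (ph gg : nat -> R -> R),
  (forall i t, is_derive (ph i) t (gg i t)) /\
  (forall i t, A - eps <= t <= A -> gg i t = F i (ph 0%nat t) (ph 1%nat t) (ph 2%nat t)) /\
  (forall i, ph i A = x i) /\
  (forall i (t : R), Rabs (ph i t - x i) <= K * Rabs (t - A)).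
Proof.
  exists phi, gX. split; [|split; [|split]].
  apply phi_deriv. apply gX_eq. apply phi_A. apply phi_near.
Qed.

End Picard.

Lemma glue (a' A : R) (Phi U dPhi dU : R -> R) :
  a' < A -> A < 0 ->
  has_deriv_on (left_int (Finite A)) U dU ->
  (forall s, a' < s <= A -> is_derive Phi s (dPhi s)) ->
  (exists C d0, 0 < d0 /\ forall t, A < t < A + d0 ->
      Rabs ((U t - Phi A) / (t - A) - dPhi A) <= C * (t - A)) ->
  has_deriv_on (left_int (Finite a'))
    (fun t => if Rle_dec t A then Phi t else U t)
    (fun t => if Rle_dec t A then dPhi t else dU t).
Proof.
  intros Ha' HA HU HPhi [C [d0 [Hd0 Hrate]]].
  apply hd_eps. intros s [Hs1 Hs2] eps He. simpl in Hs1.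
  destruct (Rtotal_order s A) as [Hlt | [Heq | Hgt]].
  - destruct (deriv_eps Phi s (dPhi s) (HPhi s ltac:(lra)) eps He) as [d [Hd Hd']].
    exists (Rmin d (A - s)). split. apply Rmin_pos; lra.
    intros t [Ht1 Ht2] ts Hts. simpl in Ht1.
    pose proof (Rmin_l d (A - s)). pose proof (Rmin_r d (A - s)).
    assert (t < A). { apply Rabs_def2 in Hts. lra. }
    destruct (Rle_dec t A); [|lra]. destruct (Rle_dec s A); [|lra].
    apply Hd'; auto. lra.
  - subst s.
    destruct (deriv_eps Phi A (dPhi A) (HPhi A ltac:(lra)) eps He) as [d [Hd Hd']].
    set (e2 := eps / (Rabs C + 1)).
    assert (He2 : 0 < e2) by (apply Rdiv_lt_0_compat; [lra | pose proof (Rabs_pos C); lra]).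
    exists (Rmin d (Rmin d0 e2)). split. repeat apply Rmin_pos; lra.
    intros t [Ht1 Ht2] ts Hts. simpl in Ht1.
    pose proof (Rmin_l d (Rmin d0 e2)). pose proof (Rmin_r d (Rmin d0 e2)).
    pose proof (Rmin_l d0 e2). pose proof (Rmin_r d0 e2).
    destruct (Rle_dec A A); [|lra].
    destruct (Rle_dec t A).
    + apply Hd'; auto. lra.
    + assert (Ht : A < t < A + d0). { apply Rabs_def2 in Hts. lra. }
      apply Rle_lt_trans with (C * (t - A)). apply Hrate; auto.
      apply Rabs_def2 in Hts.
      assert (C * (t - A) <= Rabs C * (t - A)) by (apply Rmult_le_compat_r; [lra|apply Rle_abs]).
      assert (Rabs C * (t - A) < (Rabs C + 1) * e2).
      { pose proof (Rabs_pos C). apply Rle_lt_trans with (Rabs C * e2). apply Rmult_le_compat_l; lra. nra. }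
      assert ((Rabs C + 1) * e2 = eps) by (unfold e2; field; pose proof (Rabs_pos C); lra).
      lra.
  - destruct (proj1 (hd_eps _ U dU) HU s ltac:(split; simpl; lra) eps He) as [d [Hd Hd']].
    exists (Rmin d (s - A)). split. apply Rmin_pos; lra.
    intros t [Ht1 Ht2] ts Hts. simpl in Ht1.
    pose proof (Rmin_l d (s - A)). pose proof (Rmin_r d (s - A)).
    assert (A < t). { apply Rabs_def2 in Hts. lra. }
    destruct (Rle_dec t A); [lra|]. destruct (Rle_dec s A); [lra|].
    apply Hd'; auto. split; simpl; lra. lra.
Qed.

Lemma rate (w w' : R -> R) (A c K C l w0 : R) :
  A < c -> 0 <= C ->
  (forall s, A < s <= c -> is_derive w s (w' s)) ->
  (forall s, A < s <= c -> Rabs (w' s - l) <= C * (s - A)) ->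
  (forall s, A < s <= c -> Rabs (w s - w0) <= K * (s - A)) ->
  forall t, A < t <= c -> Rabs ((w t - w0) / (t - A) - l) <= C * (t - A).
Proof.
  intros Hc HC Hd Hw' Hw t Ht.
  assert (Hn : Rabs (w t - w0 - l * (t - A)) <= C * (t - A) * (t - A)).
  { apply (small_le _ _ (K + Rabs l) (t - A)). lra.
    intros y Hy. set (t' := A + y).
    destruct (mvt_cl w w' t' t) as [xi [Hxi E]]. unfold t'; lra.
    intros z Hz. apply Hd. unfold t' in Hz; lra.
    specialize (Hw' xi ltac:(unfold t' in Hxi; lra)).
    specialize (Hw t' ltac:(unfold t'; lra)).
    replace (w t - w0 - l * (t - A)) with ((w t - w t' - l * (t - t')) + (w t' - w0) - l * (t' - A)) by (unfold t'; ring).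
    rewrite E. replace (w' xi * (t - t') - l * (t - t')) with ((w' xi - l) * (t - t')) by ring.
    eapply Rle_trans. apply Rabs_triang. eapply Rle_trans. apply Rplus_le_compat_r. apply Rabs_triang.
    rewrite Rabs_mult, Rabs_Ropp, Rabs_mult, (Rabs_right (t - t')), (Rabs_right (t' - A)) by (unfold t'; lra).
    assert (C * (xi - A) <= C * (t - A)) by (apply Rmult_le_compat_l; lra).
    assert (Rabs (w' xi - l) * (t - t') <= C * (t - A) * (t - t')) by (apply Rmult_le_compat_r; unfold t' in *; lra).
    assert (C * (t - A) * (t - t') <= C * (t - A) * (t - A)).
    { apply Rmult_le_compat_l. nra. unfold t'; lra. }
    unfold t' in *. replace (A + y - A) with y in * by ring. nra. }
  replace ((w t - w0) / (t - A) - l) with ((w t - w0 - l * (t - A)) / (t - A)) by (field; lra).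
  unfold Rdiv. rewrite Rabs_mult, Rabs_inv, (Rabs_right (t - A)) by lra.
  apply Rmult_le_reg_r with (t - A). lra.
  rewrite Rmult_assoc, Rinv_l by lra. lra.
Qed.

Definition good (f : R -> R -> R -> R) := exists B Lam, 0 <= B /\ 0 <= Lam /\
  (forall a b c, Rabs (f a b c) <= B) /\
  (forall a b c a' b' c', Rabs (f a b c - f a' b' c') <= Lam * (Rabs (a - a') + Rabs (b - b') + Rabs (c - c'))).

Definition cl (R0 x : R) := Rmax (- R0) (Rmin R0 x).

Lemma cl_bound R0 x : 0 <= R0 -> Rabs (cl R0 x) <= R0.
Proof. intros H. unfold cl, Rmax, Rmin. apply Rabs_le. repeat destruct Rle_dec; lra. Qed.

Lemma cl_lip R0 x y : 0 <= R0 -> Rabs (cl R0 x - cl R0 y) <= Rabs (x - y).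
Proof.
  intros H. pose proof (Rle_abs (x - y)). pose proof (Rle_abs (- (x - y))). rewrite Rabs_Ropp in *.
  unfold cl, Rmax, Rmin. apply Rabs_le. repeat destruct Rle_dec; lra.
Qed.

Lemma cl_id R0 x : Rabs x <= R0 -> cl R0 x = x.
Proof. intros H. apply Rabs_le_inv in H. unfold cl, Rmax, Rmin. repeat destruct Rle_dec; lra. Qed.

Lemma good_const k : good (fun _ _ _ => k).
Proof.
  exists (Rabs k), 0. split. apply Rabs_pos. split. lra. split. intros; lra.
  intros. rewrite Rminus_diag, Rabs_R0. lra.
Qed.

Lemma good_add f g : good f -> good g -> good (fun a b c => f a b c + g a b c).
Proof.
  intros [B1 [L1 [HB1 [HL1 [Hb1 Hl1]]]]] [B2 [L2 [HB2 [HL2 [Hb2 Hl2]]]]].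
  exists (B1 + B2), (L1 + L2). split. lra. split. lra. split.
  - intros. eapply Rle_trans. apply Rabs_triang. pose proof (Hb1 a b c). pose proof (Hb2 a b c). lra.
  - intros. replace (f a b c + g a b c - (f a' b' c' + g a' b' c')) with
      ((f a b c - f a' b' c') + (g a b c - g a' b' c')) by ring.
    eapply Rle_trans. apply Rabs_triang. pose proof (Hl1 a b c a' b' c'). pose proof (Hl2 a b c a' b' c'). lra.
Qed.

Lemma good_mul f g : good f -> good g -> good (fun a b c => f a b c * g a b c).
Proof.
  intros [B1 [L1 [HB1 [HL1 [Hb1 Hl1]]]]] [B2 [L2 [HB2 [HL2 [Hb2 Hl2]]]]].
  exists (B1 * B2), (B1 * L2 + B2 * L1). split. nra. split. nra. split.
  - intros. rewrite Rabs_mult. apply Rmult_le_compat; auto; apply Rabs_pos.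
  - intros. replace (f a b c * g a b c - f a' b' c' * g a' b' c') with
      (f a b c * (g a b c - g a' b' c') + g a' b' c' * (f a b c - f a' b' c')) by ring.
    eapply Rle_trans. apply Rabs_triang. rewrite !Rabs_mult.
    set (S := Rabs (a - a') + Rabs (b - b') + Rabs (c - c')).
    assert (0 <= S) by (unfold S; pose proof (Rabs_pos (a - a')); pose proof (Rabs_pos (b - b')); pose proof (Rabs_pos (c - c')); lra).
    pose proof (Hl1 a b c a' b' c'). pose proof (Hl2 a b c a' b' c'). fold S in H0, H1.
    assert (Rabs (f a b c) * Rabs (g a b c - g a' b' c') <= B1 * (L2 * S)).
    { apply Rmult_le_compat; auto; apply Rabs_pos. }
    assert (Rabs (g a' b' c') * Rabs (f a b c - f a' b' c') <= B2 * (L1 * S)).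
    { apply Rmult_le_compat; auto; apply Rabs_pos. }
    lra.
Qed.

Lemma good_cl0 R0 : 0 <= R0 -> good (fun a _ _ => cl R0 a).
Proof.
  intros H. exists R0, 1. split; auto. split. lra. split. intros; apply cl_bound; auto.
  intros. eapply Rle_trans. apply cl_lip; auto. pose proof (Rabs_pos (b - b')). pose proof (Rabs_pos (c - c')). lra.
Qed.

Lemma good_cl1 R0 : 0 <= R0 -> good (fun _ b _ => cl R0 b).
Proof.
  intros H. exists R0, 1. split; auto. split. lra. split. intros; apply cl_bound; auto.
  intros. eapply Rle_trans. apply cl_lip; auto. pose proof (Rabs_pos (a - a')). pose proof (Rabs_pos (c - c')). lra.
Qed.

Lemma good_cl2 R0 : 0 <= R0 -> good (fun _ _ c => cl R0 c).
Proof.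
  intros H. exists R0, 1. split; auto. split. lra. split. intros; apply cl_bound; auto.
  intros. eapply Rle_trans. apply cl_lip; auto. pose proof (Rabs_pos (a - a')). pose proof (Rabs_pos (b - b')). lra.
Qed.

Lemma good_h R0 (h : R -> R) M G : 0 <= R0 -> 0 <= M -> 0 <= G ->
  (forall x, Rabs (h x) <= M) ->
  (forall x y, Rabs x <= R0 -> Rabs y <= R0 -> Rabs (h x - h y) <= G * Rabs (x - y)) ->
  good (fun a _ _ => h (cl R0 a)).
Proof.
  intros HR HM HG Hb Hl. exists M, G. split; auto. split; auto. split. intros; auto.
  intros. eapply Rle_trans. apply Hl; apply cl_bound; auto.
  apply Rmult_le_compat_l; auto. pose proof (cl_lip R0 a a' HR).
  pose proof (Rabs_pos (b - b')). pose proof (Rabs_pos (c - c')). lra.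
Qed.

Lemma good_ext f g : good f -> (forall a b c, f a b c = g a b c) -> good g.
Proof.
  intros [B [L0 [H1 [H2 [H3 H4]]]]] E. exists B, L0. repeat split; auto.
  intros; rewrite <- E; auto. intros; rewrite <- !E; auto.
Qed.

Definition FF (delta : R -> R) (R0 : R) (i : nat) (a b c : R) : R :=
  match i with
  | O => cl R0 b
  | 1%nat => cl R0 c * cl R0 a / 2 - Hf delta (cl R0 a) * (cl R0 a) ^ 2 * cl R0 b
  | _ => - 4 * Hf delta (cl R0 a) * (cl R0 b) ^ 2
  end.

Lemma FF_good (delta : R -> R) R0 M G : 0 <= R0 -> 0 <= M -> 0 <= G ->
  (forall x, 0 <= Hf delta x <= M) ->
  (forall x y, Rabs x <= R0 -> Rabs y <= R0 -> Rabs (Hf delta x - Hf delta y) <= 2 * G * Rabs (x - y)) ->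
  exists K L, 0 <= K /\ 0 <= L /\
    (forall i a b c, Rabs (FF delta R0 i a b c) <= K) /\
    (forall i a b c a' b' c', Rabs (FF delta R0 i a b c - FF delta R0 i a' b' c') <= L * (Rabs (a - a') + Rabs (b - b') + Rabs (c - c'))).
Proof.
  intros HR HM HG Hb Hl.
  assert (Hh : good (fun a _ _ => Hf delta (cl R0 a))).
  { apply (good_h R0 (Hf delta) M (2 * G)); auto. lra.
    intros x. specialize (Hb x). rewrite Rabs_right; lra. }
  assert (G0 : good (FF delta R0 0)) by (apply good_cl1; auto).
  assert (G1 : good (FF delta R0 1)).
  { eapply good_ext.
    apply good_add. apply good_mul. apply good_mul. apply (good_cl2 R0 HR). apply (good_cl0 R0 HR). apply (good_const (/2)).
    apply good_mul. apply good_const with (k := -1).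
    apply good_mul. apply good_mul. apply Hh. apply good_mul. apply (good_cl0 R0 HR). apply (good_cl0 R0 HR).
    apply (good_cl1 R0 HR).
    intros; simpl; field. }
  assert (G2 : good (FF delta R0 2)).
  { eapply good_ext.
    apply good_mul. apply good_mul. apply good_const with (k := -4). apply Hh.
    apply good_mul. apply (good_cl1 R0 HR). apply (good_cl1 R0 HR).
    intros; simpl; ring. }
  destruct G0 as [B0 [L0 [? [? [Hb0 Hl0]]]]].
  destruct G1 as [B1 [L1 [? [? [Hb1 Hl1]]]]].
  destruct G2 as [B2 [L2 [? [? [Hb2 Hl2]]]]].
  exists (B0 + B1 + B2), (L0 + L1 + L2). split. lra. split. lra. split.
  - intros [|[|i]] a b c. pose proof (Hb0 a b c); lra. pose proof (Hb1 a b c); lra.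
    pose proof (Hb2 a b c). simpl in *. lra.
  - intros [|[|i]] a b c a' b' c';
    set (S := Rabs (a - a') + Rabs (b - b') + Rabs (c - c'));
    assert (HS : 0 <= S) by (unfold S; pose proof (Rabs_pos (a - a')); pose proof (Rabs_pos (b - b')); pose proof (Rabs_pos (c - c')); lra).
    + pose proof (Hl0 a b c a' b' c') as HH. fold S in HH. assert (L0 * S <= (L0 + L1 + L2) * S) by (apply Rmult_le_compat_r; lra). nra.
    + pose proof (Hl1 a b c a' b' c') as HH. fold S in HH. assert (L1 * S <= (L0 + L1 + L2) * S) by (apply Rmult_le_compat_r; lra). nra.
    + pose proof (Hl2 a b c a' b' c') as HH. fold S in HH. assert (L2 * S <= (L0 + L1 + L2) * S) by (apply Rmult_le_compat_r; lra). simpl in *. nra.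
Qed.

Lemma sol_interior (delta : R -> R) (A : R) (u du E : R -> R) :
  is_solution delta (Finite A) u du E ->
  exists ddu dE : R -> R,
    has_deriv_on (left_int (Finite A)) u du /\
    has_deriv_on (left_int (Finite A)) du ddu /\
    has_deriv_on (left_int (Finite A)) E dE /\
    (forall s, A < s <= 0 ->
      ddu s = E s * u s / 2 - Hf delta (u s) * u s ^ 2 * du s /\
      dE s = - 4 * Hf delta (u s) * du s ^ 2) /\
    (forall s, A < s < 0 ->
      is_derive u s (du s) /\ is_derive du s (ddu s) /\ is_derive E s (dE s)).
Proof.
  intros [ddu [dE [Hu [Hdu [HE Hode]]]]]. exists ddu, dE.
  split; auto. split; auto. split; auto. split.
  - intros s Hs. destruct (Hode s) as [H1 H2]. split; simpl; lra. unfold Hf. split; lra.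
  - intros s Hs.
    assert (Hr : 0 < Rmin (s - A) (- s)) by (apply Rmin_pos; lra).
    assert (HD : forall t, Rabs (t - s) < Rmin (s - A) (- s) -> left_int (Finite A) t).
    { intros t Ht. pose proof (Rmin_l (s - A) (- s)). pose proof (Rmin_r (s - A) (- s)).
      apply Rabs_def2 in Ht. split; simpl; lra. }
    assert (Ds : left_int (Finite A) s) by (split; simpl; lra).
    split. eapply hd_interior; eauto. split; eapply hd_interior; eauto.
Qed.

Lemma EXT (delta : R -> R)
  (Hnonneg : forall r, 0 < r -> 0 <= delta r)
  (M : R) (HMb : forall r, 0 < r -> Rabs (delta r) <= M)
  (Hder : forall r, 0 < r -> ex_derive delta r)
  (Hcont : forall r, 0 < r -> continuous (Derive delta) r)
  (Hlim : filterlim (fun r => sqrt r * Derive delta r) (at_right 0) (locally 0))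
  (A : R) (u du E : R -> R)
  (Hsol : is_solution delta (Finite A) u du E)
  (Hmax : maximal_left delta (Finite A) u du E)
  (B c : R) (Hc : A < c < 0)
  (HB : forall s, A < s <= c -> Rabs (u s) <= B /\ Rabs (du s) <= B /\ Rabs (E s) <= B) : False.
Proof.
  destruct (sol_interior delta A u du E Hsol) as [ddu [dE [Hu [Hdu [HE [Hode Hint]]]]]].
  assert (HB0 : 0 <= B) by (destruct (HB c ltac:(lra)) as [H _]; pose proof (Rabs_pos (u c)); lra).
  assert (HM0 : 0 <= M) by (pose proof (HMb 1 Rlt_0_1); pose proof (Rabs_pos (delta 1)); lra).
  set (R0 := B + 1).
  destruct (Hf_props delta Hnonneg M HMb Hder Hcont Hlim) as [Hfb Hfl].
  destruct (Hfl R0 ltac:(unfold R0; lra)) as [G [HG HGl]].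
  destruct (FF_good delta R0 M G ltac:(unfold R0; lra) HM0 HG Hfb HGl) as [K [L [HK [HL [HFb HFl]]]]].
  set (F := FF delta R0).
  assert (Hcl : forall s, A < s <= c -> cl R0 (u s) = u s /\ cl R0 (du s) = du s /\ cl R0 (E s) = E s).
  { intros s Hs. destruct (HB s Hs) as [H1 [H2 H3]]. unfold R0.
    split; [|split]; apply cl_id; lra. }
  assert (HF : forall s, A < s <= c ->
     du s = F 0%nat (u s) (du s) (E s) /\ ddu s = F 1%nat (u s) (du s) (E s) /\ dE s = F 2%nat (u s) (du s) (E s)).
  { intros s Hs. destruct (Hcl s Hs) as [H1 [H2 H3]]. destruct (Hode s ltac:(lra)) as [O1 O2].
    unfold F, FF. rewrite H1, H2, H3. auto. }
  assert (Hder3 : forall s, A < s <= c -> is_derive u s (du s) /\ is_derive du s (ddu s) /\ is_derive E s (dE s)).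
  { intros s Hs. apply Hint. lra. }
  assert (Hlip : forall (w w' : R -> R), (forall s, A < s <= c -> is_derive w s (w' s) /\ Rabs (w' s) <= K) ->
      forall x y, A < x <= c -> A < y <= c -> Rabs (w x - w y) <= K * Rabs (x - y)).
  { intros w w' Hw x y Hx Hy. destruct (Rle_or_lt x y).
    - rewrite Rabs_minus_sym, (Rabs_minus_sym x), (Rabs_right (y - x)) by lra.
      apply (lip_cl w w'); auto. intros z Hz; apply Hw; lra.
    - rewrite (Rabs_right (x - y)) by lra. apply (lip_cl w w'); auto. lra. intros z Hz; apply Hw; lra. }
  assert (Lu : forall x y, A < x <= c -> A < y <= c -> Rabs (u x - u y) <= K * Rabs (x - y)).
  { apply (Hlip u du). intros s Hs. split. apply Hder3; auto. destruct (HF s Hs) as [-> _]. apply HFb. }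
  assert (Lp : forall x y, A < x <= c -> A < y <= c -> Rabs (du x - du y) <= K * Rabs (x - y)).
  { apply (Hlip du ddu). intros s Hs. split. apply Hder3; auto. destruct (HF s Hs) as [_ [-> _]]. apply HFb. }
  assert (Le : forall x y, A < x <= c -> A < y <= c -> Rabs (E x - E y) <= K * Rabs (x - y)).
  { apply (Hlip E dE). intros s Hs. split. apply Hder3; auto. destruct (HF s Hs) as [_ [_ ->]]. apply HFb. }
  destruct (Llim u A c K ltac:(lra) HK Lu) as [u0 Hu0].
  destruct (Llim du A c K ltac:(lra) HK Lp) as [p0 Hp0].
  destruct (Llim E A c K ltac:(lra) HK Le) as [e0 He0].
  assert (Hbd0 : forall (w : R -> R) w0, (forall s, A < s <= c -> Rabs (w s) <= B) ->
     (forall s, A < s <= c -> Rabs (w s - w0) <= K * (s - A)) -> Rabs w0 <= B).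
  { intros w w0 H1 H2. apply (small_le _ _ K (c - A)). lra. intros y Hy.
    specialize (H1 (A + y) ltac:(lra)). specialize (H2 (A + y) ltac:(lra)).
    replace (A + y - A) with y in H2 by ring.
    pose proof (Rabs_triang_inv w0 (w (A + y))). rewrite Rabs_minus_sym in H2. lra. }
  assert (Hu0b : Rabs u0 <= B) by (apply (Hbd0 u); auto; intros s Hs; apply HB; auto).
  assert (Hp0b : Rabs p0 <= B) by (apply (Hbd0 du); auto; intros s Hs; apply HB; auto).
  assert (He0b : Rabs e0 <= B) by (apply (Hbd0 E); auto; intros s Hs; apply HB; auto).
  set (x0 := fun i : nat => match i with O => u0 | 1%nat => p0 | _ => e0 end).
  set (eps := Rmin 1 (Rmin (/ (6 * L + 1)) (/ (K + 1)))).
  assert (He1 : eps <= 1) by apply Rmin_l.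
  assert (He2 : eps <= / (6 * L + 1)) by (eapply Rle_trans; [apply Rmin_r | apply Rmin_l]).
  assert (He3 : eps <= / (K + 1)) by (eapply Rle_trans; [apply Rmin_r | apply Rmin_r]).
  assert (Heps : 0 < eps) by (repeat apply Rmin_pos; try lra; apply Rinv_0_lt_compat; lra).
  assert (Hc3 : 3 * L * eps <= / 2).
  { apply Rmult_le_compat_l with (r := 6 * L + 1) in He2; [|lra].
    rewrite Rinv_r in He2 by lra. lra. }
  assert (HKe : K * eps <= 1).
  { apply Rmult_le_compat_l with (r := K + 1) in He3; [|lra].
    rewrite Rinv_r in He3 by lra. lra. }
  destruct (picard F x0 A eps K L HK HL Heps Hc3 HFb HFl) as [ph [gg [Hph [Hgg [HphA Hphn]]]]].
  assert (Hphb : forall i t, A - eps <= t <= A -> Rabs (ph i t) <= R0).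
  { intros i t Ht. specialize (Hphn i t).
    assert (Rabs (x0 i) <= B) by (destruct i as [|[|i]]; simpl; auto).
    assert (K * Rabs (t - A) <= K * eps).
    { apply Rmult_le_compat_l; auto. rewrite Rabs_left1 by lra. lra. }
    pose proof (Rabs_triang_inv (ph i t) (x0 i)). unfold R0. lra. }
  assert (Hgg' : forall t, A - eps <= t <= A ->
     gg 0%nat t = ph 1%nat t /\
     gg 1%nat t = ph 2%nat t * ph 0%nat t / 2 - Hf delta (ph 0%nat t) * ph 0%nat t ^ 2 * ph 1%nat t /\
     gg 2%nat t = - 4 * Hf delta (ph 0%nat t) * ph 1%nat t ^ 2).
  { intros t Ht. rewrite !Hgg by auto. unfold F, FF.
    rewrite !(cl_id R0 (ph _ t)) by (apply Hphb; auto). auto. }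
  apply Hmax.
  exists (Finite (A - eps)),
    (fun t => if Rle_dec t A then ph 0%nat t else u t),
    (fun t => if Rle_dec t A then ph 1%nat t else du t),
    (fun t => if Rle_dec t A then ph 2%nat t else E t).
  split. simpl; lra.
  split.
  2:{ intros s [Hs1 Hs2]. simpl in Hs1. destruct (Rle_dec s A); [lra|]. auto. }
  exists (fun t => if Rle_dec t A then gg 1%nat t else ddu t),
         (fun t => if Rle_dec t A then gg 2%nat t else dE t).
  assert (HgA : forall i, gg i A = F i u0 p0 e0).
  { intros i. rewrite Hgg by lra. rewrite !HphA. reflexivity. }
  split; [|split; [|split]].
  - apply glue; [lra|lra|exact Hu| |].
    + intros s Hs. destruct (Hgg' s ltac:(lra)) as [H0 _]. rewrite <- H0. apply Hph.
    + exists K, (c - A). split. lra. intros t Ht.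
      rewrite HphA. simpl x0. rewrite <- (proj1 (Hgg' A ltac:(lra))), HgA. unfold F, FF.
      rewrite (cl_id R0 p0) by (unfold R0; lra).
      apply (rate u du A c K K p0 u0); auto; try lra.
      intros s Hs; apply Hder3; auto.
  - apply glue; [lra|lra|exact Hdu| |].
    + intros s Hs. apply Hph.
    + exists (L * (3 * K)), (c - A). split. lra. intros t Ht.
      rewrite HphA. simpl x0. rewrite HgA.
      apply (rate du ddu A c K (L * (3 * K)) (F 1%nat u0 p0 e0) p0); auto; try lra.
      apply Rmult_le_pos; lra.
      intros s Hs; apply Hder3; auto.
      intros s Hs. destruct (HF s Hs) as [_ [-> _]]. eapply Rle_trans. apply HFl.
      rewrite Rmult_assoc. apply Rmult_le_compat_l; auto.
      pose proof (Hu0 s Hs). pose proof (Hp0 s Hs). pose proof (He0 s Hs). lra.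
  - apply glue; [lra|lra|exact HE| |].
    + intros s Hs. apply Hph.
    + exists (L * (3 * K)), (c - A). split. lra. intros t Ht.
      rewrite HphA. simpl x0. rewrite HgA.
      apply (rate E dE A c K (L * (3 * K)) (F 2%nat u0 p0 e0) e0); auto; try lra.
      apply Rmult_le_pos; lra.
      intros s Hs; apply Hder3; auto.
      intros s Hs. destruct (HF s Hs) as [_ [_ ->]]. eapply Rle_trans. apply HFl.
      rewrite Rmult_assoc. apply Rmult_le_compat_l; auto.
      pose proof (Hu0 s Hs). pose proof (Hp0 s Hs). pose proof (He0 s Hs). lra.
  - intros s [Hs1 Hs2]. simpl in Hs1. destruct (Rle_dec s A).
    + destruct (Hgg' s ltac:(lra)) as [_ [H1 H2]]. rewrite H1, H2. unfold Hf. split; ring.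
    + destruct (Hode s ltac:(lra)) as [H1 H2]. rewrite H1, H2. unfold Hf. split; ring.
Qed.

Lemma deriv_cont (f : R -> R) x l : is_derive f x l ->
  forall e, 0 < e -> exists d, 0 < d /\ forall y, Rabs (y - x) < d -> Rabs (f y - f x) < e.
Proof.
  intros H e He.
  assert (Hc : continuous f x) by (apply (ex_derive_continuous (K := R_AbsRing) (V := R_NormedModule)); eexists; exact H).
  apply filterlim_locally with (eps := mkposreal e He) in Hc. destruct Hc as [d Hd].
  exists d. split. apply cond_pos. intros y Hy. apply ball_R. apply Hd. apply ball_R. exact Hy.
Qed.

Lemma sq_deriv (f : R -> R) x d : is_derive f x d -> is_derive (fun s => f s * f s) x (2 * (d * f x)).
Proof.
  intros H. pose proof (is_derive_mult f f x d d H H) as H2.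
  replace (2 * (d * f x)) with (plus (mult d (f x)) (mult (f x) d)). apply H2.
  intros; apply Rmult_comm.
  unfold plus, mult; simpl. ring.
Qed.

Lemma prod_deriv (f g : R -> R) x df dg : is_derive f x df -> is_derive g x dg ->
  is_derive (fun s => f s * g s) x (df * g x + f x * dg).
Proof.
  intros H1 H2. pose proof (is_derive_mult f g x df dg H1 H2) as H3.
  replace (df * g x + f x * dg) with (plus (mult df (g x)) (mult (f x) dg)). apply H3.
  intros; apply Rmult_comm.
  unfold plus, mult; simpl. ring.
Qed.

Lemma lin_deriv (f : R -> R) x d C : is_derive f x d -> is_derive (fun s => 1 + C * f s) x (C * d).
Proof.
  intros H. pose proof (is_derive_plus _ _ x _ _ (is_derive_const 1 x) (is_derive_scal f x C d H)) as H2.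
  replace (C * d) with (plus zero (C * d)). exact H2. unfold plus, zero; simpl. ring.
Qed.

Lemma exp_deriv k x : is_derive (fun s => exp (k * s)) x (k * exp (k * x)).
Proof. auto_derive. auto. rewrite Rmult_1_r. reflexivity. Qed.

Lemma zero_sol (delta : R -> R) : is_solution delta (Finite (-1)) (fun _ => 0) (fun _ => 0) (fun _ => 0).
Proof.
  assert (Hc : forall D, has_deriv_on D (fun _ : R => 0) (fun _ => 0)).
  { intros D. apply hd_eps. intros s _ eps He. exists 1. split. lra. intros t _ ts _.
    replace ((0 - 0) / (t - s) - 0) with 0 by (field; intro; apply ts; lra). rewrite Rabs_R0; lra. }
  exists (fun _ => 0), (fun _ => 0). split; [|split; [|split]]; auto.
  intros s _. cbv beta. split; field.
Qed.

Theorem lemma9p2 (delta : R -> R)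
  (Hnonneg : forall r, 0 < r -> 0 <= delta r)
  (Hbdd : exists M, forall r, 0 < r -> Rabs (delta r) <= M)
  (Hder : forall r, 0 < r -> ex_derive delta r)
  (Hcont : forall r, 0 < r -> continuous (Derive delta) r)
  (Hlim : filterlim (fun r => sqrt r * Derive delta r) (at_right 0) (locally 0))
  (A : R) (u du E : R -> R)
  (Hsol : is_solution delta (Finite A) u du E)
  (HM : on_M (Finite A) u du E)
  (Hmax : maximal_left delta (Finite A) u du E) :
  exists s1, A < s1 <= 0 /\ forall s, A < s <= s1 -> du s * u s < 0.
Proof.
  destruct Hbdd as [M HMb].
  destruct (Rlt_or_le A 0) as [HA | HA].
  2:{ exfalso. apply Hmax. exists (Finite (-1)), (fun _ => 0), (fun _ => 0), (fun _ => 0).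
      split. simpl; lra. split. apply zero_sol. intros s [Hs1 Hs2]. simpl in Hs1. lra. }
  assert (HM0 : 0 <= M) by (pose proof (HMb 1 Rlt_0_1); pose proof (Rabs_pos (delta 1)); lra).
  destruct (Hf_props delta Hnonneg M HMb Hder Hcont Hlim) as [Hfb _].
  destruct (sol_interior delta A u du E Hsol) as [ddu [dE [_ [_ [_ [Hode Hint]]]]]].
  pose proof (EXT delta Hnonneg M HMb Hder Hcont Hlim A u du E Hsol Hmax) as Hext.
  assert (HMs : forall s, A < s <= 0 -> 2 * du s ^ 2 - E s * u s ^ 2 = 1).
  { intros s Hs. apply HM. split; simpl; lra. }
  assert (HdE : forall s, A < s <= 0 -> dE s <= 0).
  { intros s Hs. destruct (Hode s Hs) as [_ ->]. specialize (Hfb (u s)).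
    assert (0 <= du s ^ 2) by (apply pow2_ge_0). nra. }
  assert (Emono : forall x y, A < x <= y -> y < 0 -> E y <= E x).
  { intros x y Hxy Hy. destruct (mvt_cl E dE x y ltac:(lra)) as [xi [Hxi Exi]].
    intros z Hz; apply Hint; lra.
    assert (dE xi <= 0) by (apply HdE; lra). nra. }
  set (c := A / 2).
  assert (Hc : A < c < 0) by (unfold c; lra).
  assert (Hs0 : exists s0, A < s0 <= c /\ 0 <= E s0).
  { apply NNPP. intros Hn.
    assert (Hneg : forall s, A < s <= c -> E s < 0).
    { intros s Hs. apply Rnot_le_lt. intros Hle. apply Hn. exists s; auto. }
    apply (Hext (Rabs (u c) + (c - A) + 1 + Rabs (E c)) c Hc).
    intros s Hs.
    assert (Hdu1 : forall z, A < z <= c -> Rabs (du z) <= 1).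
    { intros z Hz. specialize (HMs z ltac:(lra)). specialize (Hneg z Hz).
      assert (0 <= u z ^ 2) by apply pow2_ge_0.
      assert (du z ^ 2 <= 1 / 2) by nra.
      apply Rabs_le. split; nra. }
    split; [|split].
    - pose proof (lip_cl u du 1 s c ltac:(lra)) as H.
      assert (Rabs (u c - u s) <= 1 * (c - s)).
      { apply H. intros z Hz. split. apply Hint; lra. apply Hdu1; lra. }
      pose proof (Rabs_triang_inv (u s) (u c)). rewrite Rabs_minus_sym in H0.
      pose proof (Rabs_pos (E c)). lra.
    - pose proof (Hdu1 s Hs). pose proof (Rabs_pos (u c)). pose proof (Rabs_pos (E c)). lra.
    - assert (E c <= E s) by (apply Emono; lra). pose proof (Hneg s Hs). pose proof (Hneg c ltac:(lra)).
      rewrite (Rabs_left (E s)), (Rabs_left (E c)) by lra. pose proof (Rabs_pos (u c)). lra. }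
  destruct Hs0 as [s0 [Hs0 HEs0]].
  assert (HEpos : forall s, A < s <= s0 -> 0 <= E s).
  { intros s Hs. assert (E s0 <= E s) by (apply Emono; lra). lra. }
  assert (Ht0 : exists t0, A < t0 <= s0 /\ du t0 * u t0 < 0).
  { apply NNPP. intros Hn.
    assert (Hw : forall s, A < s <= s0 -> 0 <= du s * u s).
    { intros s Hs. apply Rnot_lt_le. intros Hlt. apply Hn. exists s; auto. }
    assert (Hu2 : forall s, A < s <= s0 -> u s * u s <= u s0 * u s0).
    { intros s Hs. apply (mono_cl (fun z => u z * u z) (fun z => 2 * (du z * u z))). lra.
      intros z Hz. split. apply sq_deriv. apply Hint; lra. specialize (Hw z ltac:(lra)). lra. }
    set (C := u s0 * u s0 + 1).
    assert (HC : 1 <= C) by (unfold C; nra).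
    set (psi := fun z => (1 + C * E z) * exp (2 * M * C * z)).
    assert (Hpsi : forall s, A < s <= s0 -> psi s <= psi s0).
    { intros s Hs. apply (mono_cl psi (fun z => C * dE z * exp (2 * M * C * z) + (1 + C * E z) * (2 * M * C * exp (2 * M * C * z)))). lra.
      intros z Hz. split.
      - apply (prod_deriv (fun s => 1 + C * E s) (fun s => exp (2 * M * C * s))). apply lin_deriv. apply Hint; lra. apply exp_deriv.
      - assert (Hez := exp_pos (2 * M * C * z)).
        destruct (Hode z ltac:(lra)) as [_ HdEz].
        specialize (HMs z ltac:(lra)). specialize (Hfb (u z)). specialize (Hu2 z ltac:(lra)).
        specialize (HEpos z ltac:(lra)).
        assert (HEu : E z * u z ^ 2 <= C * E z) by (unfold C; simpl; nra).
        assert (Hdu2 : 2 * du z ^ 2 <= 1 + C * E z) by lra.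
        assert (HdE2 : - 2 * M * (1 + C * E z) <= dE z).
        { rewrite HdEz. assert (0 <= du z ^ 2) by apply pow2_ge_0. nra. }
        assert (0 <= dE z + 2 * M * (1 + C * E z)) by lra.
        replace (C * dE z * exp (2 * M * C * z) + (1 + C * E z) * (2 * M * C * exp (2 * M * C * z)))
          with (C * exp (2 * M * C * z) * (dE z + 2 * M * (1 + C * E z))) by ring.
        apply Rmult_le_pos; [|lra]. apply Rmult_le_pos; lra. }
    set (Q := psi s0 * / exp (2 * M * C * A)).
    assert (HEb : forall s, A < s <= s0 -> E s <= Q).
    { intros s Hs. specialize (Hpsi s Hs). unfold psi in Hpsi.
      assert (exp (2 * M * C * A) <= exp (2 * M * C * s)).
      { apply exp_le_3 || (destruct (Rle_lt_or_eq_dec _ _ (Rmult_le_compat_l (2 * M * C) A s ltac:(nra) ltac:(lra))) as [Hl|He];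
          [left; apply exp_increasing; exact Hl | right; rewrite He; reflexivity]). }
      specialize (HEpos s Hs).
      assert (Hex := exp_pos (2 * M * C * A)).
      assert ((1 + C * E s) * exp (2 * M * C * A) <= psi s0).
      { eapply Rle_trans; [|exact Hpsi]. apply Rmult_le_compat_l; nra. }
      unfold Q. apply Rmult_le_reg_r with (exp (2 * M * C * A)). auto.
      replace (psi s0 * / exp (2 * M * C * A) * exp (2 * M * C * A)) with (psi s0) by (field; lra). assert (E s <= C * E s) by nra. nra. }
    apply (Hext (Rabs (u s0) + Q + 1 + (1 + Q * C)) s0 ltac:(lra)).
    intros s Hs. specialize (HEb s Hs). specialize (HEpos s Hs).
    assert (HQ : 0 <= Q) by lra.
    assert (Hus : Rabs (u s) <= Rabs (u s0)).
    { specialize (Hu2 s Hs). apply Rnot_lt_le. intros Hlt.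
      assert (Rabs (u s0) * Rabs (u s0) < Rabs (u s) * Rabs (u s)).
      { pose proof (Rabs_pos (u s0)). apply Rmult_le_0_lt_compat; lra. }
      rewrite <- !Rabs_mult, !Rabs_right in H by nra. lra. }
    split; [|split].
    - pose proof (Rabs_pos (u s0)). assert (0 <= Q * C) by nra. lra.
    - specialize (HMs s ltac:(lra)). specialize (Hu2 s Hs).
      assert (E s * u s ^ 2 <= Q * C).
      { simpl. apply Rle_trans with (E s * C). apply Rmult_le_compat_l. lra. unfold C; lra.
        apply Rmult_le_compat_r; lra. }
      assert (0 <= Q * C) by nra. assert (du s ^ 2 <= 1 + Q * C) by lra.
      assert (Rabs (du s) <= 1 + du s ^ 2).
      { apply Rabs_le. split; nra. }
      pose proof (Rabs_pos (u s0)). lra.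
    - rewrite Rabs_right by lra. pose proof (Rabs_pos (u s0)). nra. }
  destruct Ht0 as [t0 [Ht0 Hwt0]].
  exists t0. split. lra.
  set (w := fun z => du z * u z).
  assert (Hwd : forall z, A < z < 0 -> is_derive w z (ddu z * u z + du z * du z)).
  { intros z Hz. apply prod_deriv; apply Hint; lra. }
  intros s Hs. destruct (Req_dec s t0) as [->|Hst]; auto.
  apply Rnot_le_lt. intros Hws. change (0 <= w s) in Hws.
  set (S := fun r => s <= r <= t0 /\ 0 <= w r).
  destruct (completeness S) as [z [Hub Hlub]].
  { exists t0. intros r [Hr _]. lra. }
  { exists s. split; [lra|auto]. }
  assert (Hsz : s <= z) by (apply Hub; split; [lra|auto]).
  assert (Hzt : z <= t0) by (apply Hlub; intros r [Hr _]; lra).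
  assert (Hzi : A < z < 0) by lra.
  assert (Hwz : 0 <= w z).
  { apply Rnot_lt_le. intros Hlt.
    destruct (deriv_cont w z _ (Hwd z Hzi) (- w z) ltac:(lra)) as [d [Hd Hd']].
    assert (z <= z - d) .
    { apply Hlub. intros r [Hr1 Hr2]. specialize (Hub r (conj Hr1 Hr2)).
      apply Rnot_lt_le. intros Hlt2. assert (Rabs (r - z) < d) by (apply Rabs_def1; lra).
      specialize (Hd' r H). apply Rabs_def2 in Hd'. lra. }
    lra. }
  assert (Hzt' : z < t0).
  { destruct (Req_dec z t0) as [E0|]; [|lra]. rewrite E0 in Hwz. unfold w in Hwz. lra. }
  assert (Hright : forall r, z < r <= t0 -> w r < 0).
  { intros r Hr. apply Rnot_le_lt. intros Hle. assert (r <= z) by (apply Hub; split; [lra|auto]). lra. }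
  assert (Hw0 : w z = 0).
  { destruct (Rle_lt_or_eq_dec _ _ Hwz) as [Hp|]; auto. exfalso.
    destruct (deriv_cont w z _ (Hwd z Hzi) (w z) Hp) as [d [Hd Hd']].
    set (r := z + Rmin d (t0 - z) / 2).
    assert (0 < Rmin d (t0 - z)) by (apply Rmin_pos; lra).
    pose proof (Rmin_l d (t0 - z)). pose proof (Rmin_r d (t0 - z)).
    assert (Rabs (r - z) < d) by (unfold r; apply Rabs_def1; lra).
    specialize (Hd' r H2). apply Rabs_def2 in Hd'.
    specialize (Hright r ltac:(unfold r; lra)). lra. }
  assert (Hw'z : 1 / 2 <= ddu z * u z + du z * du z).
  { destruct (Hode z ltac:(lra)) as [Hddu _]. rewrite Hddu.
    specialize (HMs z ltac:(lra)). specialize (HEpos z ltac:(lra)).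
    unfold w in Hw0.
    set (a := u z) in *. set (b := du z) in *. set (e := E z) in *. set (h := Hf delta a) in *.
    assert (Ea : (e * a / 2 - h * a ^ 2 * b) * a + b * b = e * (a * a) / 2 - h * a ^ 2 * (b * a) + b * b) by (unfold Rdiv; ring).
    rewrite Ea, Hw0.
    assert (Eb : 2 * b ^ 2 - e * a ^ 2 = 2 * (b * b) - e * (a * a)) by ring.
    rewrite Eb in HMs.
    assert (0 <= e * (a * a)) by (apply Rmult_le_pos; nra).
    nra. }
  destruct (deriv_eps w z _ (Hwd z Hzi) (1 / 4) ltac:(lra)) as [d [Hd Hd']].
  set (r := z + Rmin d (t0 - z) / 2).
  assert (0 < Rmin d (t0 - z)) by (apply Rmin_pos; lra).
  pose proof (Rmin_l d (t0 - z)). pose proof (Rmin_r d (t0 - z)).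
  assert (Rabs (r - z) < d) by (unfold r; apply Rabs_def1; lra).
  assert (r <> z) by (unfold r; lra).
  specialize (Hd' r H3 H2). apply Rabs_def2 in Hd'.
  specialize (Hright r ltac:(unfold r; lra)).
  rewrite Hw0 in Hd'.
  assert (Hq : (w r - 0) / (r - z) < 0).
  { unfold Rdiv. apply Rmult_neg_pos. lra. apply Rinv_0_lt_compat. unfold r; lra. }
  lra.
Qed.
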